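(* The category of filtered complexes over a field $\mathbb F$ is a Krull–Schmidt category. Moreover, a filtered complex is an indecomposable object of this category if and only if it is basic.
   Context: Fix a field $\mathbb F$; all vector spaces are finite-dimensional over $\mathbb F$. A complex is a family $(V_n,\partial_n)_{n\in\mathbb Z}$ of finite-dimensional vector spaces and linear maps $\partial_n:V_n\to V_{n-1}$ with $\partial_{n-1}\circ\partial_n=0$, such that all but finitely many $\partial_n$ are isomorphisms (equivalently, only finitely many $V_n$ are nonzero); morphisms of complexes are chain maps. A filtered complex is a family of complexes $({}_pV_\bullet)_{p\in\mathbb Z}$ in which each ${}_pV_\bullet$ is a subcomplex of ${}_{p+1}V_\bullet$, such that ${}_pV_\bullet=0$ for all sufficiently small $p$ and ${}_pV_\bullet={}_{p+1}V_\bullet$ for all but finitely many $p$; its colimit $V_\bullet$ is ${}_pV_\bullet$ for $p$ sufficiently large. A morphism of filtered complexes $({}_pV_\bullet)\to({}_pW_\bullet)$ is a family of chain maps ${}_pV_\bullet\to{}_pW_\bullet$ commuting with the inclusions; direct sums are formed levelwise. For $n\in\mathbb Z$, $J[n]$ denotes the complex with $\mathbb F$ in degree $n$ and $0$ elsewhere, and $K[n]$ the complex with $\mathbb F$ in degrees $n$ and $n+1$, $\partial_{n+1}=\mathrm{id}_{\mathbb F}$, and $0$ elsewhere. A filtered complex is basic if its colimit is isomorphic to $J[n]$ or to $K[n]$ for some $n$. An object of an additive category is indecomposable if it is nonzero and not isomorphic to a direct sum of two nonzero objects. A ring is local if $1\neq 0$ and for every element $f$, if $f$ is not invertible then $1-f$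 is invertible. An additive category is Krull–Schmidt if every object is isomorphic to a finite direct sum of indecomposable objects and every indecomposable object has a local endomorphism ring. *)

(* Defs.v *)
(* Finite-dimensional F-vector spaces are modelled as F^d
   (row vectors), linear maps as matrices acting on the right (v *m A),
   subspaces as row spaces of matrices (mxalgebra, scope %MS). *)
From HB Require Import structures.
From mathcomp Require Import all_boot all_order all_algebra.
Set Implicit Arguments. Unset Strict Implicit. Unset Printing Implicit Defensive.
Import GRing.Theory Num.Theory.
Local Open Scope ring_scope.

Section Defs.
Variable F : fieldType.

Record cplx := Cplx {
  cdim : int -> nat;
  cdif : forall n : int, 'M[F]_(cdim n, cdim (n - 1)) }.

Definition is_cplx (C : cplx) : Prop :=
  (forall n : int, cdif C n *m cdif C (n - 1) = 0) /\
  (exists N : nat, forall n : int, (N%:Z < `|n|) -> cdim C n = 0%N).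

Definition chain_map (C D : cplx) (f : forall n : int, 'M[F]_(cdim C n, cdim D n)) :=
  forall n : int, cdif C n *m f (n - 1) = f n *m cdif D n.

Definition ciso (C D : cplx) : Prop :=
  exists (f : forall n : int, 'M[F]_(cdim C n, cdim D n))
         (g : forall n : int, 'M[F]_(cdim D n, cdim C n)),
    [/\ chain_map f, chain_map g,
        forall n, f n *m g n = 1%:M & forall n, g n *m f n = 1%:M].

Definition cJ (n : int) : cplx :=
  @Cplx (fun m : int => if m == n then 1%N else 0%N) (fun m => 0).
(* the only index m with both dims nonzero is m = n+1, where the map is id_F *)
Definition cK (n : int) : cplx :=
  @Cplx (fun m : int => if (m == n) || (m == n + 1) then 1%N else 0%N)
       (fun m => const_mx 1).

Definition czero : cplx := @Cplx (fun _ => 0%N) (fun _ => 0).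

Definition cdsum (C D : cplx) : cplx :=
  @Cplx (fun n => (cdim C n + cdim D n)%N)
       (fun n => block_mx (cdif C n) 0 0 (cdif D n)).

(* A filtered complex is given by its colimit complex fcol together with the
   subspaces ffil p n = (pV)_n of V_n (as row spaces). *)
Record fcplx := FCplx {
  fcol : cplx;
  ffil : int -> forall n : int, 'M[F]_(cdim fcol n) }.

Definition is_fcplx (V : fcplx) : Prop :=
  [/\ is_cplx (fcol V),
      forall p n : int, (ffil V p n *m cdif (fcol V) n <= ffil V p (n - 1))%MS,
      forall p n : int, (ffil V p n <= ffil V (p + 1) n)%MS &
      exists P : nat, forall p n : int,
        (p <= - P%:Z -> ffil V p n = 0) /\
        (P%:Z <= p -> (1%:M <= ffil V p n)%MS)].

Definition fmorph (V W : fcplx)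
  (f : forall n : int, 'M[F]_(cdim (fcol V) n, cdim (fcol W) n)) : Prop :=
  chain_map f /\ forall p n : int, (ffil V p n *m f n <= ffil W p n)%MS.

Definition fiso (V W : fcplx) : Prop :=
  exists (f : forall n : int, 'M[F]_(cdim (fcol V) n, cdim (fcol W) n))
         (g : forall n : int, 'M[F]_(cdim (fcol W) n, cdim (fcol V) n)),
    [/\ fmorph f, fmorph g,
        forall n, f n *m g n = 1%:M & forall n, g n *m f n = 1%:M].

Definition fzero : fcplx := @FCplx czero (fun _ _ => 0).

Definition fdsum (V W : fcplx) : fcplx :=
  @FCplx (cdsum (fcol V) (fcol W))
        (fun p n => block_mx (ffil V p n) 0 0 (ffil W p n)).

Definition fdsum_seq (s : seq fcplx) : fcplx := foldr fdsum fzero s.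

Definition nonzero_obj (V : fcplx) : Prop := ~ fiso V fzero.

Definition indecomposable (V : fcplx) : Prop :=
  nonzero_obj V /\
  forall A B : fcplx, is_fcplx A -> is_fcplx B ->
    nonzero_obj A -> nonzero_obj B -> ~ fiso V (fdsum A B).

(* End(V): endomorphisms, with + pointwise and product = composition. *)
Definition end_invertible (V : fcplx)
  (f : forall n : int, 'M[F]_(cdim (fcol V) n)) : Prop :=
  exists g : forall n : int, 'M[F]_(cdim (fcol V) n),
    fmorph g /\ forall n, g n *m f n = 1%:M /\ f n *m g n = 1%:M.

Definition local_end (V : fcplx) : Prop :=
  ~ (forall n : int, (1%:M : 'M[F]_(cdim (fcol V) n)) = 0) /\
  forall f : forall n : int, 'M[F]_(cdim (fcol V) n), fmorph f ->
    ~ end_invertible f -> end_invertible (fun n => 1%:M - f n).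

Definition krull_schmidt : Prop :=
  (forall V : fcplx, is_fcplx V ->
     exists s : seq fcplx,
       (forall i : nat, (i < size s)%N ->
          is_fcplx (nth fzero s i) /\ indecomposable (nth fzero s i)) /\
       fiso V (fdsum_seq s)) /\
  (forall V : fcplx, is_fcplx V -> indecomposable V -> local_end V).

Definition basic (V : fcplx) : Prop :=
  exists n : int, ciso (fcol V) (cJ n) \/ ciso (fcol V) (cK n).

End Defs.

(* Main.v *)
Require Import Defs.
From HB Require Import structures.
From mathcomp Require Import all_boot all_order all_algebra.
From mathcomp Require Import zify.
From Stdlib Require Import Classical.
Set Implicit Arguments. Unset Strict Implicit. Unset Printing Implicit Defensive.
Import Order.TTheory GRing.Theory Num.Theory.
Local Open Scope ring_scope.
Section Gen.
Variable F : fieldType.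

Lemma mx_dim0 a b (M N : 'M[F]_(a, b)) : (a = 0%N \/ b = 0%N) -> M = N.
Proof.
move=> h; apply/matrixP => i j; case: h => h.
  by have := ltn_ord i; rewrite [X in (_ < X)%N]h.
by have := ltn_ord j; rewrite [X in (_ < X)%N]h.
Qed.

Definition sumall a b (M : 'M[F]_(a, b)) := \sum_i \sum_j M i j.

Lemma mx11_const a b (M : 'M[F]_(a, b)) : a = 1%N -> b = 1%N -> M = const_mx (sumall M).
Proof.
move=> ha hb; rewrite /sumall; move: M; rewrite ha hb => M.
by apply/matrixP => i j; rewrite !mxE !big_ord1 !ord1.
Qed.

Lemma mx1_scalar a (M : 'M[F]_a) : a = 1%N -> M = (sumall M)%:M.
Proof.
move=> ha; rewrite /sumall; move: M; rewrite ha => M.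
by apply/matrixP => i j; rewrite !mxE !big_ord1 !ord1 eqxx mulr1n.
Qed.

Lemma const_mul1 a b c x y : a = 1%N -> b = 1%N -> c = 1%N ->
  (const_mx x : 'M[F]_(a, b)) *m (const_mx y : 'M[F]_(b, c)) = const_mx (x * y).
Proof.
move=> ha hb hc; rewrite ha hb hc.
by apply/matrixP => i j; rewrite !mxE big_ord1 !mxE.
Qed.

Lemma const_mul1s a b x y : a = 1%N -> b = 1%N ->
  (const_mx x : 'M[F]_(a, b)) *m (const_mx y : 'M[F]_(b, a)) = (x * y)%:M.
Proof.
move=> ha hb; rewrite ha hb.
by apply/matrixP => i j; rewrite !mxE big_ord1 !mxE !ord1 eqxx mulr1n.
Qed.

Lemma const1_neq0 a b : (0 < a)%N -> (0 < b)%N -> (const_mx 1 : 'M[F]_(a, b)) != 0.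
Proof.
move=> ha hb; apply/eqP => /matrixP /(_ (Ordinal ha) (Ordinal hb)).
by rewrite !mxE => /eqP; rewrite oner_eq0.
Qed.

Lemma scalar1_neq0 a : (0 < a)%N -> (1%:M : 'M[F]_a) != 0.
Proof.
move=> ha; apply/eqP => /matrixP /(_ (Ordinal ha) (Ordinal ha)).
by rewrite !mxE eqxx mulr1n => /eqP; rewrite oner_eq0.
Qed.

Lemma iso_dim a b (f : 'M[F]_(a, b)) (g : 'M[F]_(b, a)) :
  f *m g = 1%:M -> g *m f = 1%:M -> a = b.
Proof.
move=> fg gf; apply/eqP; rewrite eqn_leq.
have h1 := mxrankM_maxl f g; have h2 := mxrankM_maxl g f.
rewrite fg mxrank1 in h1; rewrite gf mxrank1 in h2.
by rewrite (leq_trans h1 (rank_leq_col _)) (leq_trans h2 (rank_leq_col _)).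
Qed.

Lemma sub_mul0 m1 m2 n p (A : 'M[F]_(m1, n)) (B : 'M[F]_(m2, n)) (C : 'M[F]_(n, p)) :
  (A <= B)%MS -> B *m C = 0 -> A *m C = 0.
Proof. by move=> /submxP [D ->] h; rewrite -mulmxA h mulmx0. Qed.

Lemma block_sub m1 m2 m3 m4 n1 n2 (X : 'M[F]_(m1, n1)) (X' : 'M[F]_(m3, n1))
  (Y : 'M[F]_(m2, n2)) (Y' : 'M[F]_(m4, n2)) :
  (X <= X')%MS -> (Y <= Y')%MS -> (block_mx X 0 0 Y <= block_mx X' 0 0 Y')%MS.
Proof.
move=> /submxP [D ->] /submxP [E ->].
apply/submxP; exists (block_mx D 0 0 E).
by rewrite mulmx_block !mulmx0 !mul0mx !addr0 !add0r.
Qed.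

Lemma row_block_sub m n1 n2 (X : 'M[F]_(m, n1)) (Y : 'M[F]_(m, n2)) :
  (row_mx X Y <= block_mx X 0 0 Y)%MS.
Proof.
apply/submxP; exists (row_mx 1%:M 1%:M).
by rewrite mul_row_block !mul1mx !addr0 !add0r.
Qed.

Definition at_ (T : int -> Type) (a : int) (x : T a) (d : forall k, T k) : forall k, T k :=
  fun k => match @eqP _ a k with ReflectT h => eq_rect a T x k h | ReflectF _ => d k end.

Lemma at_eq T a x d : @at_ T a x d a = x.
Proof.
rewrite /at_; case: eqP => // h.
by rewrite (eq_irrelevance h erefl).
Qed.

Lemma at_neq T a x d k : k != a -> @at_ T a x d k = d k.
Proof. move=> hk; rewrite /at_; case: eqP => // h; by rewrite h eqxx in hk. Qed.

Lemma exists_jump (Q : int -> bool) (a b : int) : a <= b -> ~~ Q a -> Q b ->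
  exists q, Q q && ~~ Q (q - 1).
Proof.
move=> hab; have [k hk] : exists k : nat, b = a + k%:Z by exists (absz (b - a)); lia.
rewrite hk => {hk hab b}; elim: k => [|k IH] na qb.
  have e0 : a + 0%:Z = a by lia.
  by rewrite e0 in qb; rewrite qb in na.
case qk: (Q (a + k%:Z)); last first.
  exists (a + k.+1%:Z); rewrite qb /=.
  have ->: a + k.+1%:Z - 1 = a + k%:Z by lia.
  by rewrite qk.
exact: IH.
Qed.

End Gen.
Section Iso.
Variable F : fieldType.
Implicit Types V W A B R : fcplx F.

Lemma fiso_trans U V W : fiso U V -> fiso V W -> fiso U W.
Proof.
move=> [f1 [g1 [[c1 m1] [c1' m1'] fg1 gf1]]] [f2 [g2 [[c2 m2] [c2' m2'] fg2 gf2]]].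
exists (fun n => f1 n *m f2 n), (fun n => g2 n *m g1 n); split.
- split=> [n|p n].
    by rewrite mulmxA c1 -!mulmxA c2.
  by rewrite mulmxA (submx_trans (submxMr _ (m1 p n))).
- split=> [n|p n].
    by rewrite mulmxA c2' -!mulmxA c1'.
  by rewrite mulmxA (submx_trans (submxMr _ (m2' p n))).
- by move=> n; rewrite mulmxA -(mulmxA (f1 n)) fg2 mulmx1 fg1.
- by move=> n; rewrite mulmxA -(mulmxA (g2 n)) gf1 mulmx1 gf2.
Qed.

Lemma fiso_dsumr A R R' : fiso R R' -> fiso (fdsum A R) (fdsum A R').
Proof.
move=> [f [g [[c m] [c' m'] fg gf]]].
exists (fun n => block_mx 1%:M 0 0 (f n)), (fun n => block_mx 1%:M 0 0 (g n)); split.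
- split=> [n|p n] /=.
    by rewrite !mulmx_block !mulmx0 !mul0mx !mulmx1 !mul1mx !addr0 !add0r c.
  rewrite mulmx_block !mulmx0 !mul0mx !mulmx1 !addr0 !add0r.
  exact: block_sub.
- split=> [n|p n] /=.
    by rewrite !mulmx_block !mulmx0 !mul0mx !mulmx1 !mul1mx !addr0 !add0r c'.
  rewrite mulmx_block !mulmx0 !mul0mx !mulmx1 !addr0 !add0r.
  exact: block_sub.
- move=> n; rewrite mulmx_block !mulmx0 !mul0mx !mulmx1 !addr0 !add0r fg.
  by rewrite -scalar_mx_block.
- move=> n; rewrite mulmx_block !mulmx0 !mul0mx !mulmx1 !addr0 !add0r gf.
  by rewrite -scalar_mx_block.
Qed.

Lemma fiso_dim V W : fiso V W -> forall n, cdim (fcol V) n = cdim (fcol W) n.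
Proof. by move=> [f [g [_ _ fg gf]]] n; exact: iso_dim (fg n) (gf n). Qed.

Lemma nonzero_dim V : nonzero_obj V <-> exists m, (0 < cdim (fcol V) m)%N.
Proof.
split.
  move=> nz; apply: NNPP => hne; apply: nz.
  have h0 : forall m, cdim (fcol V) m = 0%N.
    by move=> m; apply/eqP; rewrite -leqn0 leqNgt; apply/negP => h; apply: hne; exists m.
  exists (fun _ => 0), (fun _ => 0); split.
  - by split=> [n|p n]; [apply: mx_dim0; left | rewrite mulmx0 sub0mx].
  - by split=> [n|p n]; [apply: mx_dim0; right | rewrite mulmx0 sub0mx].
  - by move=> n; apply: mx_dim0; left.
  - by move=> n; apply: mx_dim0; left.
move=> [m hm] hiso; have := fiso_dim hiso m; rewrite /= => h.
by rewrite h in hm.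
Qed.

End Iso.
Section SubMx.
Variable F : fieldType.

Fact iB_key : unit. Proof. by []. Qed.
Definition iB n (E : 'M[F]_n) := locked_with iB_key (row_base E).
Definition pB n (E : 'M[F]_n) := locked_with iB_key (E *m pinvmx (row_base E)).
Lemma iBE n (E : 'M[F]_n) : iB E = row_base E. Proof. by rewrite /iB locked_withE. Qed.
Lemma pBE n (E : 'M[F]_n) : pB E = E *m pinvmx (row_base E). Proof. by rewrite /pB locked_withE. Qed.

Section Idem.
Variables (n : nat) (E : 'M[F]_n).
Hypothesis HE : E *m E = E.

Lemma iB_E : iB E *m E = iB E.
Proof.
have : (iB E <= E)%MS by rewrite iBE eq_row_base.
by case/submxP => D ->; rewrite -mulmxA HE.
Qed.

Lemma iB_pB : iB E *m pB E = 1%:M.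
Proof.
rewrite pBE mulmxA iB_E iBE; apply: (row_free_inj (row_base_free E)) => /=.
by rewrite mul1mx mulmxKpV.
Qed.

Lemma pB_iB : pB E *m iB E = E.
Proof. by rewrite pBE iBE mulmxKpV // eq_row_base. Qed.

Lemma E_pB : E *m pB E = pB E.
Proof. by rewrite pBE mulmxA HE. Qed.

Lemma iB_cross (E' : 'M[F]_n) : E *m E' = 0 -> iB E *m pB E' = 0.
Proof. by move=> h; rewrite pBE -iB_E mulmxA -(mulmxA _ E) h mulmx0 mul0mx. Qed.

End Idem.

Lemma idem_compl n (E : 'M[F]_n) : E *m E = E -> (1%:M - E) *m (1%:M - E) = 1%:M - E.
Proof. by move=> h; rewrite mulmxBl !mulmxBr !mul1mx !mulmx1 h subrr subr0. Qed.

Lemma compl_mul n (E : 'M[F]_n) : E *m E = E -> E *m (1%:M - E) = 0 /\ (1%:M - E) *m E = 0.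
Proof. by move=> h; split; [rewrite mulmxBr mulmx1 | rewrite mulmxBl mul1mx]; rewrite h subrr. Qed.

Lemma sub_chain1 a b (D : 'M[F]_(a, b)) (E1 : 'M[F]_a) (E2 : 'M[F]_b) :
  E1 *m E1 = E1 -> E2 *m E2 = E2 -> D *m E2 = E1 *m D ->
  pB E1 *m (iB E1 *m D *m pB E2) = D *m pB E2.
Proof.
move=> h1 h2 hD; rewrite !mulmxA pB_iB // -hD -mulmxA.
by rewrite E_pB.
Qed.

Lemma sub_chain2 a b (D : 'M[F]_(a, b)) (E1 : 'M[F]_a) (E2 : 'M[F]_b) :
  E1 *m E1 = E1 -> E2 *m E2 = E2 -> D *m E2 = E1 *m D ->
  iB E1 *m D *m pB E2 *m iB E2 = iB E1 *m D.
Proof.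
move=> h1 h2 hD; rewrite -mulmxA pB_iB // -mulmxA hD mulmxA iB_E //.
Qed.

End SubMx.

Section Sub.
Variable F : fieldType.
Variable V : fcplx F.
Variable e : forall m, 'M[F]_(cdim (fcol V) m).

Definition fsubC := @Cplx F (fun m => \rank (e m))
  (fun m => iB (e m) *m cdif (fcol V) m *m pB (e (m - 1))).
Definition fsub := @FCplx F fsubC (fun p m => (<< ffil V p m *m pB (e m) >>)%MS).

Hypothesis He : fmorph e.
Hypothesis Hid : forall m, e m *m e m = e m.

Lemma fsub_is : is_fcplx V -> is_fcplx fsub.
Proof.
move=> [[c0 [N hN]] hsub hmon [P hP]]; case: He => hc hf.
split.
- split.
    move=> m /=; rewrite !mulmxA (sub_chain2 (Hid _) (Hid _) (hc _)).
    by rewrite -!mulmxA (mulmxA (cdif _ m)) c0 mul0mx mulmx0.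
  by exists N => n hn /=; apply/eqP; rewrite -leqn0 -(hN n hn) rank_leq_row.
- move=> p m /=; rewrite (eqmxMr _ (genmxE _)) genmxE -mulmxA.
  rewrite (sub_chain1 (Hid _) (Hid _) (hc _)) mulmxA; exact: submxMr.
- by move=> p m /=; rewrite !genmxE submxMr.
- exists P => p m; have [h1 h2] := hP p m; split=> /=.
    by move=> hp; rewrite h1 // mul0mx genmx0.
  move=> hp; rewrite genmxE -(iB_pB (Hid m)); apply: submxMr.
  exact: submx_trans (submx1 _) (h2 hp).
Qed.

End Sub.
Section Split.
Variable F : fieldType.
Variable V : fcplx F.
Variable e : forall m, 'M[F]_(cdim (fcol V) m).
Hypothesis He : fmorph e.
Hypothesis Hid : forall m, e m *m e m = e m.

Definition ce := fun m => 1%:M - e m.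

Lemma ce_fmorph : fmorph ce.
Proof.
case: He => hc hf; split.
  by move=> n; rewrite /ce mulmxBr mulmxBl mulmx1 mul1mx hc.
move=> p n; rewrite /ce mulmxBr mulmx1; apply: addmx_sub => //.
by rewrite eqmx_opp.
Qed.

Lemma ce_id m : ce m *m ce m = ce m.
Proof. exact: idem_compl. Qed.

Lemma fsub_split : fiso V (fdsum (fsub e) (fsub ce)).
Proof.
have [hc hf] := He; have [hc' hf'] := ce_fmorph.
exists (fun m => row_mx (pB (e m)) (pB (ce m))),
       (fun m => col_mx (iB (e m)) (iB (ce m))); split.
- split=> [n|p n] /=.
    rewrite mul_mx_row mul_row_block !mulmx0 addr0 add0r.
    by rewrite (sub_chain1 (Hid _) (Hid _) (hc _)) (sub_chain1 (ce_id _) (ce_id _) (hc' _)).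
  rewrite mul_mx_row; apply: submx_trans (row_block_sub _ _) _.
  by apply: block_sub; rewrite genmxE.
- split=> [n|p n] /=.
    rewrite mul_block_col mul_col_mx !mul0mx addr0 add0r.
    by rewrite (sub_chain2 (Hid _) (Hid _) (hc _)) (sub_chain2 (ce_id _) (ce_id _) (hc' _)).
  rewrite mul_block_col !mul0mx addr0 add0r col_mx_sub.
  rewrite !(eqmxMr _ (genmxE _)) -!mulmxA pB_iB ?Hid // pB_iB ?ce_id //.
  by rewrite hf hf'.
- move=> n; rewrite mul_row_col pB_iB // pB_iB ?ce_id //.
  by rewrite /ce addrC subrK.
- move=> n; rewrite mul_col_row iB_pB // iB_pB ?ce_id //.
  have [h1 h2] := compl_mul (Hid n).
  rewrite (iB_cross (Hid n) h1) (iB_cross (ce_id n) h2).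
  by rewrite -scalar_mx_block.
Qed.

End Split.
Section Shape.
Variable F : fieldType.
Implicit Types C : cplx F.

Definition shapeJ C (t : int) := forall m, cdim C m = nat_of_bool (m == t).
Definition shapeK C (t : int) :=
  (forall m, cdim C m = nat_of_bool ((m == t - 1) || (m == t))) /\ cdif C t != 0.

Lemma shapeJ_ciso C (t : int) : shapeJ C t -> ciso C (cJ F t).
Proof.
move=> hd.
have hJ : forall m, cdim (cJ F t) m = nat_of_bool (m == t) by move=> m /=; case: (m == t).
exists (fun m => const_mx 1), (fun m => const_mx 1); split.
- move=> m; case: (eqVneq m t) => [->|hm].
    apply: mx_dim0; right; rewrite hJ; case: eqP => // h; lia.
  by apply: mx_dim0; left; rewrite hd (negbTE hm).
- move=> m; case: (eqVneq m t) => [->|hm].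
    apply: mx_dim0; right; rewrite hd; case: eqP => // h; lia.
  by apply: mx_dim0; left; rewrite hJ (negbTE hm).
- move=> m; case: (eqVneq m t) => [->|hm].
    by rewrite const_mul1s ?hd ?hJ ?eqxx // mulr1.
  by apply: mx_dim0; left; rewrite hd (negbTE hm).
- move=> m; case: (eqVneq m t) => [->|hm].
    by rewrite const_mul1s ?hd ?hJ ?eqxx // mulr1.
  by apply: mx_dim0; left; rewrite hJ (negbTE hm).
Qed.

Lemma shapeK_ciso C (t : int) : shapeK C t -> ciso C (cK F (t - 1)).
Proof.
move=> [hd hnz].
have hK : forall m, cdim (cK F (t - 1)) m = nat_of_bool ((m == t - 1) || (m == t)).
  by move=> m /=; rewrite subrK; case: ifP.
have d1 : cdim C t = 1%N by rewrite hd eqxx orbT.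
have d0 : cdim C (t - 1) = 1%N by rewrite hd eqxx.
have k1 : cdim (cK F (t - 1)) t = 1%N by rewrite hK eqxx orbT.
have k0 : cdim (cK F (t - 1)) (t - 1) = 1%N by rewrite hK eqxx.
have hne : t - 1 != t by apply/eqP; lia.
set dl := sumall (cdif C t).
have hdl : dl != 0.
  apply: contra hnz => /eqP h0; apply/eqP.
  by rewrite (mx11_const (cdif C t) d1 d0) -/dl h0; apply/matrixP => i j; rewrite !mxE.
exists (fun m => const_mx (if m == t then dl else 1)),
       (fun m => const_mx (if m == t then dl^-1 else 1)); split.
- move=> m; case: (eqVneq m t) => [->|hm].
    rewrite (mx11_const (cdif C t) d1 d0) -/dl !const_mul1 // (negbTE hne).
    by rewrite ?eqxx.
  case: (eqVneq m (t - 1)) => [hm1|hm1].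
    apply: mx_dim0; right; rewrite hK; case: eqP => h; [lia|]; case: eqP => h'; lia.
  by apply: mx_dim0; left; rewrite hd (negbTE hm) (negbTE hm1).
- move=> m; case: (eqVneq m t) => [->|hm].
    rewrite (mx11_const (cdif C t) d1 d0) -/dl !const_mul1 // (negbTE hne).
    by rewrite mulVf // mulr1.
  case: (eqVneq m (t - 1)) => [hm1|hm1].
    apply: mx_dim0; right; rewrite hd; case: eqP => h; [lia|]; case: eqP => h'; lia.
  by apply: mx_dim0; left; rewrite hK (negbTE hm) (negbTE hm1).
- move=> m; case: (eqVneq m t) => [->|hm].
    by rewrite const_mul1s // ?eqxx mulfV.
  case: (eqVneq m (t - 1)) => [->|hm1].
    by rewrite const_mul1s // ?(negbTE hne) mulr1.
  by apply: mx_dim0; left; rewrite hd (negbTE hm) (negbTE hm1).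
- move=> m; case: (eqVneq m t) => [->|hm].
    by rewrite const_mul1s // ?eqxx mulVf.
  case: (eqVneq m (t - 1)) => [->|hm1].
    by rewrite const_mul1s // ?(negbTE hne) mulr1.
  by apply: mx_dim0; left; rewrite hK (negbTE hm) (negbTE hm1).
Qed.

End Shape.
Section ShapeV.
Variable F : fieldType.
Implicit Types V A B : fcplx F.

Definition shapeV V := exists t, shapeJ (fcol V) t \/ shapeK (fcol V) t.

Lemma basic_shape V : basic V -> shapeV V.
Proof.
move=> [n [[f [g [cf _ fg gf]]] | [f [g [cf _ fg gf]]]]].
  exists n; left => m; rewrite (iso_dim (fg m) (gf m)) /=.
  by case: (m == n).
exists (n + 1); right; split.
  by move=> m; rewrite (iso_dim (fg m) (gf m)) /= addrK; case: ifP.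
apply/eqP => h0.
have := cf (n + 1); rewrite h0 mul0mx => /(congr1 (mulmx (g (n + 1)))).
rewrite mulmx0 mulmxA gf mul1mx => /esym /eqP.
apply/negP; apply: const1_neq0.
  by rewrite /= eqxx orbT.
by rewrite /= addrK eqxx.
Qed.

Lemma shape_nonzero V : shapeV V -> exists t, cdim (fcol V) t = 1%N.
Proof.
by move=> [t [h|[h _]]]; exists t; rewrite h eqxx ?orbT.
Qed.

Lemma shape_indec V : shapeV V -> indecomposable V.
Proof.
move=> hs; have [t0 ht0] := shape_nonzero hs.
split; first by apply/nonzero_dim; exists t0; rewrite ht0.
move=> A B _ _ /nonzero_dim [a hA] /nonzero_dim [b hB] hiso.
have hsum m : (cdim (fcol A) m + cdim (fcol B) m)%N = cdim (fcol V) m.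
  by rewrite (fiso_dim hiso m).
case: hs => t [hd | [hd hnz]].
  have ea : a = t.
    apply/eqP; apply: contraLR hA => h; have := hsum a; rewrite hd (negbTE h) /=; lia.
  have eb : b = t.
    apply/eqP; apply: contraLR hB => h; have := hsum b; rewrite hd (negbTE h) /=; lia.
  have := hsum t; rewrite hd eqxx /=; subst a b; lia.
have hne : t - 1 != t by apply/eqP; lia.
have hcase : forall x, (0 < cdim (fcol A) x \/ 0 < cdim (fcol B) x)%N -> x = t - 1 \/ x = t.
  move=> x hx; case: (eqVneq x (t - 1)) => h1; first by left.
  case: (eqVneq x t) => h2; first by right.
  have := hsum x; rewrite hd (negbTE h1) (negbTE h2) /=; lia.
have ha' := hcase a (or_introl hA); have hb' := hcase b (or_intror hB).
have ht1 := hsum (t - 1); rewrite hd eqxx /= in ht1.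
have ht := hsum t; rewrite hd eqxx orbT /= in ht.
have [zA zB] : cdif (fcol A) t = 0 /\ cdif (fcol B) t = 0.
  case: ha' => ea; case: hb' => eb; subst a b.
  - lia.
  - by split; apply: mx_dim0; [left | right]; lia.
  - by split; apply: mx_dim0; [right | left]; lia.
  - lia.
have [f [g [[cf _] _ fg gf]]] := hiso.
have := cf t; rewrite /= zA zB block_mx0 mulmx0 => h0.
move/eqP: hnz; apply.
by rewrite -[cdif _ t]mulmx1 -(fg (t - 1)) mulmxA h0 mul0mx.
Qed.

Lemma end_inv_ext V (f f' : forall n, 'M[F]_(cdim (fcol V) n)) :
  (forall n, f n = f' n) -> end_invertible f' -> end_invertible f.
Proof. by move=> h [g [hg hi]]; exists g; split=> // n; rewrite h. Qed.

Lemma scal_inv V (c : F) : c != 0 -> end_invertible (fun n : int => (c%:M : 'M[F]_(cdim (fcol V) n))).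
Proof.
move=> hc; exists (fun n => c^-1%:M); split.
  split=> [n|p n]; first by rewrite scalar_mxC.
  by rewrite mul_mx_scalar scalemx_sub.
by move=> n; rewrite -!scalar_mxM mulVf ?mulfV.
Qed.

Lemma shape_local V : shapeV V -> local_end V.
Proof.
move=> hs; have [t0 ht0] := shape_nonzero hs.
split.
  by move/(_ t0)/eqP; apply/negP; apply: scalar1_neq0; rewrite ht0.
move=> f [cf _] ninv.
have [c hc] : exists c, forall m, f m = c%:M.
  case: hs => t [hd | [hd hnz]].
    exists (sumall (f t)) => m; case: (eqVneq m t) => [->|hm].
      by apply: mx1_scalar; rewrite hd eqxx.
    by apply: mx_dim0; left; rewrite hd (negbTE hm).
  have hne : t - 1 != t by apply/eqP; lia.
  set c1 := sumall (f (t - 1)); set c2 := sumall (f t).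
  have e1 : f (t - 1) = c1%:M by apply: mx1_scalar; rewrite hd eqxx.
  have e2 : f t = c2%:M by apply: mx1_scalar; rewrite hd eqxx orbT.
  have ec : c1 = c2.
    have := cf t; rewrite e1 e2 mul_mx_scalar mul_scalar_mx => /eqP.
    rewrite -subr_eq0 -scalerBl scalemx_eq0 (negbTE hnz) orbF subr_eq0.
    by move/eqP.
  exists c2 => m.
  case: (eqVneq m t) => [->|hm]; first by [].
  case: (eqVneq m (t - 1)) => [->|hm1]; first by rewrite e1 ec.
  by apply: mx_dim0; left; rewrite hd (negbTE hm) (negbTE hm1).
have c0 : c = 0.
  apply/eqP; apply: NNPP => hc0; apply: ninv.
  apply: (end_inv_ext hc); apply: scal_inv; exact/negP.
apply: (end_inv_ext (f' := fun n => (1 - c)%:M)).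
  by move=> n; rewrite hc c0 subr0; apply/matrixP => i j; rewrite !mxE mul0rn subr0.
by apply: scal_inv; rewrite c0 subr0 oner_eq0.
Qed.

End ShapeV.
Section Helpers.
Variable F : fieldType.

Lemma mul_row_neq0 m n p (A : 'M[F]_(m, n)) (B : 'M[F]_(n, p)) :
  A *m B != 0 -> exists i, row i A *m B != 0.
Proof.
move=> h; apply: NNPP => hn; move/eqP: h; apply; apply/row_matrixP => i.
rewrite row_mul row0; apply/eqP; apply: NNPP => hi; apply: hn; exists i; exact/negP.
Qed.

Lemma functional n m (u : 'rV[F]_n) (U : 'M[F]_(m, n)) :
  ~~ (u <= U)%MS -> exists mu : 'cV[F]_n, U *m mu = 0 /\ u *m mu = 1%:M.
Proof.
rewrite submxE; move: (cokermx U) (mulmx_coker U) => K hK hu.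
have [j hj] : exists j, (u *m K) 0 j != 0.
  apply: NNPP => hn; move: hu; apply/negP; rewrite negbK; apply/eqP/matrixP => i j.
  rewrite ord1 [RHS]mxE; apply/eqP; apply: NNPP => hij; apply: hn; exists j; exact/negP.
exists (((u *m K) 0 j)^-1 *: (K *m delta_mx j 0)); split.
  by rewrite -scalemxAr mulmxA hK mul0mx scaler0.
rewrite -scalemxAr mulmxA -colE; move: (u *m K) hj => X hX.
by apply/matrixP => a b; rewrite !ord1 !mxE eqxx mulr1n mulVf.
Qed.

Lemma rank1_proj n (x : 'cV[F]_n) (y : 'rV[F]_n) :
  y != 0 -> y *m x *m y = y -> \rank (x *m y) = 1%N.
Proof.
move=> hy hyx; apply/eqP; rewrite eqn_leq; apply/andP; split.
  exact: leq_trans (mxrankM_maxr _ _) (rank_leq_row _).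
have : (y <= x *m y)%MS by rewrite -{1}hyx -mulmxA submxMl.
move/mxrankS; apply: leq_trans; rewrite lt0n mxrank_eq0 //.
Qed.

End Helpers.
Section SplitEx.
Variable F : fieldType.
Variable V : fcplx F.
Local Notation d := (cdif (fcol V)).
Local Notation Fl := (ffil V).
Hypothesis c0 : forall n, d n *m d (n - 1) = 0.
Hypothesis hsub : forall p n, (Fl p n *m d n <= Fl p (n - 1))%MS.
Hypothesis hmon : forall p n, (Fl p n <= Fl (p + 1) n)%MS.
Variable P : nat.
Hypothesis hP : forall p n, (p <= - P%:Z -> Fl p n = 0) /\ (P%:Z <= p -> (1%:M <= Fl p n)%MS).

Lemma mon p q n : p <= q -> (Fl p n <= Fl q n)%MS.
Proof.
move=> hpq; have [k hk] : exists k : nat, q = p + k%:Z by exists (absz (q - p)); lia.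
rewrite hk {hk hpq q}; elim: k => [|k IH]; first by have -> : p + 0%:Z = p by lia.
apply: submx_trans IH _; have -> : p + k.+1%:Z = (p + k%:Z) + 1 by lia.
exact: hmon.
Qed.

Definition split_spec (e : forall m, 'M[F]_(cdim (fcol V) m)) :=
  [/\ fmorph e, forall m, e m *m e m = e m &
    exists t, (forall m, \rank (e m) = nat_of_bool (m == t)) \/
      ((forall m, \rank (e m) = nat_of_bool ((m == t - 1) || (m == t))) /\ e t *m d t != 0)].

Lemma splitK t : d t != 0 -> exists e, split_spec e.
Proof.
move=> hdt.
have [r /andP [hr1 hr2]] : exists r, (Fl r t *m d t != 0) && ~~ (Fl (r - 1) t *m d t != 0).
  apply: (@exists_jump (fun p => Fl p t *m d t != 0) (- P%:Z) P%:Z).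
  - lia.
  - by rewrite (proj1 (hP _ t) (lexx _)) mul0mx eqxx.
  - apply: contra hdt => /eqP h; apply/eqP; have h1 := proj2 (hP P%:Z t) (lexx _).
    by rewrite -(mul1mx (d t)); apply: sub_mul0 h1 h.
rewrite negbK in hr2.
have [i hi] := mul_row_neq0 hr1.
move: (row_sub i (Fl r t)) hi; set v := row i (Fl r t) => hv hi.
move: hi; set w := v *m d t => hw.
have [q /andP [hq1 hq2]] : exists q, (w <= Fl q (t - 1))%MS && ~~ (w <= Fl (q - 1) (t - 1))%MS.
  apply: (@exists_jump (fun p => (w <= Fl p (t - 1))%MS) (- P%:Z) P%:Z).
  - lia.
  - by rewrite (proj1 (hP _ _) (lexx _)) submx0.
  - exact: submx_trans (submx1 _) (proj2 (hP _ _) (lexx _)).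
have [mu [hmu1 hmu2]] := functional hq2.
pose vF := @at_ (fun k => 'rV[F]_(cdim (fcol V) k)) t v (fun _ => 0).
pose muF := @at_ (fun k => 'cV[F]_(cdim (fcol V) k)) (t - 1) mu (fun _ => 0).
pose wF := @at_ (fun k => 'rV[F]_(cdim (fcol V) k)) (t - 1) w (fun _ => 0).
have hne : t - 1 != t by apply/eqP; lia.
have hne' : t != t - 1 by apply/eqP; lia.
have vFt : vF t = v by apply: at_eq.
have muFt : muF (t - 1) = mu by apply: at_eq.
have wFt : wF (t - 1) = w by apply: at_eq.
have vFn k : k != t -> vF k = 0 by move=> hk; apply: at_neq.
have muFn k : k != t - 1 -> muF k = 0 by move=> hk; apply: at_neq.
have wFn k : k != t - 1 -> wF k = 0 by move=> hk; apply: at_neq.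
have L1 a k (X : 'M[F]_(a, 1)) : X *m vF k *m muF k = 0.
  case: (eqVneq k t) => [->|hk]; first by rewrite muFn // mulmx0.
  by rewrite vFn // mulmx0 mul0mx.
have L2 a k (X : 'M[F]_(a, 1)) : X *m wF k *m d k = 0.
  case: (eqVneq k (t - 1)) => [->|hk]; last by rewrite wFn // mulmx0 mul0mx.
  by rewrite wFt -mulmxA /w -mulmxA c0 !mulmx0.
have L5 a k (X : 'M[F]_(a, 1)) : X *m vF k *m d k = X *m wF (k - 1).
  case: (eqVneq k t) => [->|hk]; first by rewrite vFt wFt -mulmxA.
  rewrite vFn // wFn ?mulmx0 ?mul0mx //; apply/eqP => h; move/eqP: hk; apply; lia.
have L3 a k (X : 'M[F]_(a, 1)) : X *m vF k *m d k *m muF (k - 1) *m vF k = X *m vF k.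
  rewrite L5; case: (eqVneq k t) => [->|hk]; last by rewrite vFn // !mulmx0.
  by rewrite wFt muFt vFt -(mulmxA X) hmu2 mulmx1.
have L4 a k (X : 'M[F]_(a, 1)) : X *m wF k *m muF k *m wF k = X *m wF k.
  case: (eqVneq k (t - 1)) => [->|hk]; last by rewrite wFn // !mulmx0.
  by rewrite wFt muFt -(mulmxA X) hmu2 mulmx1.
pose e := fun k => d k *m muF (k - 1) *m vF k + muF k *m wF k.
have et : e t = d t *m mu *m v by rewrite /e muFt vFt muFn // mul0mx addr0.
have vne : v != 0 by apply: contra hw => /eqP h; rewrite /w h mul0mx.
have vet : v *m e t = v by rewrite et !mulmxA -/w hmu2 mul1mx.
exists e; split.
- split.
    move=> m; rewrite /e mulmxDr mulmxDl !mulmxA c0 !mul0mx add0r L5 L2 addr0.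
    by [].
  move=> p k; rewrite /e mulmxDr; apply: addmx_sub.
    case: (eqVneq k t) => [->|hk]; last by rewrite vFn // !mulmx0 sub0mx.
    rewrite vFt muFt; case: (ltrP p r) => hp.
      have h0 : Fl p t *m d t = 0.
        by apply: sub_mul0 (mon _ (_ : p <= r - 1)) (eqP hr2); lia.
      by rewrite !mulmxA h0 !mul0mx sub0mx.
    rewrite mulmxA; apply: submx_trans (submxMl _ _) _.
    exact: submx_trans hv (mon _ hp).
  case: (eqVneq k (t - 1)) => [->|hk]; last by rewrite wFn // !mulmx0 sub0mx.
  rewrite muFt wFt; case: (ltrP p q) => hp.
    have h0 : Fl p (t - 1) *m mu = 0.
      by apply: sub_mul0 (mon _ (_ : p <= q - 1)) hmu1; lia.
    by rewrite mulmxA h0 mul0mx sub0mx.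
  rewrite mulmxA; apply: submx_trans (submxMl _ _) _.
  exact: submx_trans hq1 (mon _ hp).
- move=> k; rewrite /e mulmxDl !mulmxDr !mulmxA L3 L1 L2 L4 !mul0mx addr0 add0r.
  by [].
- exists t; right; split.
    move=> m; case: (eqVneq m t) => [->|hm].
      rewrite et ?eqxx ?orbT; apply: rank1_proj => //.
      by rewrite !mulmxA -/w hmu2 mul1mx.
    case: (eqVneq m (t - 1)) => [->|hm1].
      rewrite /e vFn // mulmx0 add0r muFt wFt ?eqxx /=.
      apply: rank1_proj => //; by rewrite hmu2 mul1mx.
    by rewrite /e vFn // wFn // !mulmx0 addr0 mxrank0.
  apply: contra hw => /eqP h.
  by rewrite /w -vet -mulmxA h mulmx0.
Qed.

Lemma splitJ t : (forall m, d m = 0) -> (0 < cdim (fcol V) t)%N -> exists e, split_spec e.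
Proof.
move=> hd0 ht.
have [q /andP [hq1 hq2]] : exists q, (Fl q t != 0) && ~~ (Fl (q - 1) t != 0).
  apply: (@exists_jump (fun p => Fl p t != 0) (- P%:Z) P%:Z).
  - lia.
  - by rewrite (proj1 (hP _ t) (lexx _)) eqxx.
  - apply/eqP => h0; have := proj2 (hP P%:Z t) (lexx _); rewrite h0 submx0.
    by apply/negP; apply: scalar1_neq0.
rewrite negbK in hq2.
have h1 : Fl q t *m 1%:M != 0 by rewrite mulmx1.
have [i hi] := mul_row_neq0 h1.
rewrite mulmx1 in hi.
move: (row_sub i (Fl q t)) hi; set v := row i (Fl q t) => hv hi.
have h2 : ~~ (v <= (0 : 'M[F]_(cdim (fcol V) t)))%MS by rewrite submx0.
have [mu [_ hmu]] := functional h2.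
pose e := @at_ (fun k => 'M[F]_(cdim (fcol V) k)) t (mu *m v) (fun _ => 0).
have et : e t = mu *m v by apply: at_eq.
have en k : k != t -> e k = 0 by move=> hk; apply: at_neq.
exists e; split.
- split; first by move=> m; rewrite !hd0 mul0mx mulmx0.
  move=> p k; case: (eqVneq k t) => [->|hk]; last by rewrite en // !mulmx0 sub0mx.
  rewrite et; case: (ltrP p q) => hp.
    have h0 : Fl p t = 0.
      apply/eqP; rewrite -submx0 -(eqP hq2); apply: mon; lia.
    by rewrite h0 mul0mx sub0mx.
  rewrite mulmxA; apply: submx_trans (submxMl _ _) _.
  exact: submx_trans hv (mon _ hp).
- move=> k; case: (eqVneq k t) => [->|hk]; last by rewrite en // mulmx0.
  by rewrite et mulmxA -(mulmxA mu) hmu mulmx1.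
- exists t; left => m; case: (eqVneq m t) => [->|hm].
    by rewrite et ?eqxx; apply: rank1_proj => //; rewrite hmu mul1mx.
  by rewrite en // mxrank0.
Qed.

End SplitEx.
Section Final.
Variable F : fieldType.
Implicit Types V A R : fcplx F.

Lemma split_exists V : is_fcplx V -> (exists m, 0 < cdim (fcol V) m)%N ->
  exists e : forall m, 'M[F]_(cdim (fcol V) m), split_spec e.
Proof.
move=> [[c0 _] _ hmon [P hP]] [m hm].
case: (classic (exists t, cdif (fcol V) t != 0)) => [[t ht]|hn].
  have h := splitK c0 hmon hP ht; exact h.
have hd0 : forall n, cdif (fcol V) n = 0.
  move=> n; apply/eqP; apply: NNPP => h; apply: hn.
  by exists n; apply/negP.
have h := splitJ hmon hP hd0 hm; exact h.
Qed.

Lemma spec_sub_shape V (e : forall m, 'M[F]_(cdim (fcol V) m)) :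
  split_spec e -> shapeV (fsub e).
Proof.
move=> [[hc hf] Hid [t [hJ | [hK hnz]]]]; exists t; first by left => m /=; exact: hJ.
right; split=> //=.
apply: contra hnz => /eqP h; apply/eqP.
have := congr1 (mulmx (pB (e t))) h; rewrite mulmx0 (sub_chain1 (Hid _) (Hid _) (hc t)) => h2.
by rewrite -(hc t) -(pB_iB (e (t - 1))) mulmxA h2 mul0mx.
Qed.

Lemma spec_rank1 V (e : forall m, 'M[F]_(cdim (fcol V) m)) :
  split_spec e -> exists t, \rank (e t) = 1%N.
Proof.
by move=> [_ _ [t [hJ | [hK _]]]]; exists t; rewrite ?hJ ?hK eqxx ?orbT.
Qed.

Lemma spec_full_shape V (e : forall m, 'M[F]_(cdim (fcol V) m)) :
  split_spec e -> (forall m, e m = 1%:M) -> shapeV V.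
Proof.
move=> [_ _ [t [hJ | [hK hnz]]]] h1; exists t.
  by left => m; rewrite -hJ h1 mxrank1.
by right; split; [move=> m; rewrite -hK h1 mxrank1 | rewrite h1 mul1mx in hnz].
Qed.

Lemma indec_shape V : is_fcplx V -> indecomposable V -> shapeV V.
Proof.
move=> hV [nz hsp].
have [e hs] := split_exists hV (proj1 (nonzero_dim V) nz).
have [He Hid _] := hs.
have hR : ~ nonzero_obj (fsub (ce e)).
  move=> hR; apply: (hsp _ _ (fsub_is He Hid hV) (fsub_is (ce_fmorph He) (ce_id Hid) hV)) => //.
    by apply/nonzero_dim; have [t ht] := spec_rank1 hs; exists t; rewrite /= ht.
  exact: fsub_split.
apply: (spec_full_shape hs) => m.
have : \rank (ce e m) = 0%N.
  apply/eqP; rewrite -leqn0 leqNgt; apply/negP => h; apply: hR.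
  by apply/nonzero_dim; exists m.
by move/eqP; rewrite mxrank_eq0 /ce subr_eq0 => /eqP <-.
Qed.

Definition tdim (N : nat) V := (\sum_(i < (2 * N).+1) cdim (fcol V) (i%:Z - N%:Z))%N.

Lemma tdim_ge N V t : `|t| <= N%:Z -> (cdim (fcol V) t <= tdim N V)%N.
Proof.
move=> ht; have hi : (absz (t + N%:Z)%R < (2 * N).+1)%N by lia.
rewrite /tdim (bigD1 (Ordinal hi)) //=.
have -> : (absz (t + N%:Z))%:Z - N%:Z = t by lia.
exact: leq_addr.
Qed.

Definition ks_concl V := exists s : seq (fcplx F),
  (forall i : nat, (i < size s)%N ->
     is_fcplx (nth (fzero F) s i) /\ indecomposable (nth (fzero F) s i)) /\
  fiso V (fdsum_seq s).

Lemma ks_step N V :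
  (forall R, is_fcplx R -> (forall m, N%:Z < `|m| -> cdim (fcol R) m = 0%N) ->
     (tdim N R < tdim N V)%N -> ks_concl R) ->
  is_fcplx V -> (forall m, N%:Z < `|m| -> cdim (fcol V) m = 0%N) -> ks_concl V.
Proof.
move=> IH hV hN.
case: (classic (exists m, 0 < cdim (fcol V) m)%N) => [hnz|hz].
  have [e hs] := split_exists hV hnz; have [He Hid _] := hs.
  have hsplit := fsub_split He Hid.
  have hd m := fiso_dim hsplit m.
  have hRi := fsub_is (ce_fmorph He) (ce_id Hid) hV.
  have [sR [hsR isoR]] : ks_concl (fsub (ce e)).
    apply: IH => //.
      move=> m hm; apply/eqP; rewrite -leqn0 -(hN m hm) (hd m) /=; exact: leq_addl.
    have [t ht] := spec_rank1 hs.
    have htN : `|t| <= N%:Z.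
      rewrite leNgt; apply/negP => hlt; have := hN t hlt; rewrite (hd t) /= ht; lia.
    have hsum : (tdim N (fsub e) + tdim N (fsub (ce e)))%N = tdim N V.
      rewrite /tdim -big_split /=; apply: eq_bigr => i _; exact: (esym (hd _)).
    have := tdim_ge (fsub e) htN; rewrite /= ht => h1.
    by rewrite -hsum; lia.
  exists (fsub e :: sR); split.
    case=> [|i] /= hi.
      split; first exact: fsub_is.
      exact: shape_indec (spec_sub_shape hs).
    exact: hsR.
  apply: fiso_trans hsplit _; exact: fiso_dsumr.
exists [::]; split => //=.
apply: NNPP => hn; apply: hz; apply/nonzero_dim; exact: hn.
Qed.

Lemma ks_ex N : forall k V, is_fcplx V ->
  (forall m, N%:Z < `|m| -> cdim (fcol V) m = 0%N) -> (tdim N V <= k)%N -> ks_concl V.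
Proof.
elim=> [|k IH] V hV hN hk; apply: (ks_step (N := N)) => // R hR hRN hlt.
  by move: hlt; rewrite leqn0 in hk; rewrite (eqP hk).
apply: IH => //; lia.
Qed.

End Final.

Theorem theorem1p6 (F : fieldType) :
  krull_schmidt F /\
  (forall V : fcplx F, is_fcplx V -> (indecomposable V <-> basic V)).
Proof.
split.
  split.
    move=> V hV; have [[_ [N hN]] _ _ _] := hV.
    have h := @ks_ex F N (tdim N V) V hV hN (leqnn _); exact h.
  by move=> V hV hi; apply: shape_local; apply: indec_shape.
move=> V hV; split.
  move=> hi; have [t [hJ | hK]] := indec_shape hV hi.
    by exists t; left; apply: shapeJ_ciso.
  by exists (t - 1); right; apply: shapeK_ciso.
by move=> hb; apply: shape_indec; apply: basic_shape.
Qed.
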